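(* Let $p^{(0)}\in[0,1]^n$ and let $p^{(1)},p^{(2)},p^{(3)},\dots$ be random vectors in $[0,1]^n$ such that for every $h\ge1$, conditionally on $(p^{(0)},\dots,p^{(h-1)})$, the vector $p^{(h)}$ is a probabilistic aggregate of $p^{(h-1)}$. Then: (1) for every $h\ge 0$ and every $i$, if $p^{(h)}_i\in\{0,1\}$ then $p^{(h+1)}_i=p^{(h)}_i$ almost surely; consequently, along the sequence any entry that has been set to $0$ or $1$ remains set, and the number of positive entries of $p^{(h+1)}$ is at most that of $p^{(h)}$; (2) (transitivity) for all $0\le h_1<h_2$, conditionally on $(p^{(0)},\dots,p^{(h_1)})$, the vector $p^{(h_2)}$ is a probabilistic aggregate of $p^{(h_1)}$.
   Context: A random vector $q\in[0,1]^n$ is a probabilistic aggregate of a vector $r\in[0,1]^n$ if: (i) $\mathbb{E}[q_i]=r_i$ for all $i$; (ii) $\sum_i q_i=\sum_i r_i$ (with probability one); (iii) for every $J\subseteq[n]$, $\mathbb{E}\big[\prod_{i\in J}q_i\big]\le\prod_{i\in J}r_i$ and $\mathbb{E}\big[\prod_{i\in J}(1-q_i)\big]\le\prod_{i\in J}(1-r_i)$. *)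

(* Defs.v *)
From HB Require Import structures.
From mathcomp Require Import all_boot all_order all_algebra.
From mathcomp Require Import all_classical all_reals all_analysis.
Set Implicit Arguments. Unset Strict Implicit. Unset Printing Implicit Defensive.
Import Order.TTheory GRing.Theory Num.Theory.
Local Open Scope classical_set_scope.
Local Open Scope ring_scope.

Definition hist_gen (d : measure_display) (T : measurableType d) (R : realType)
  (n : nat) (p : nat -> 'I_n -> T -> R) (h : nat) : set (set T) :=
  [set A | exists k (i : 'I_n) (B : set R),
      (k <= h)%N /\ measurable B /\ A = p k i @^-1` B].

Definition history (d : measure_display) (T : measurableType d) (R : realType)
  (n : nat) (p : nat -> 'I_n -> T -> R) (h : nat) : set (set T) :=
  <<s hist_gen p h >>.

(* Conditional expectations
   are expressed through their defining property: E[X | G] <= Y (resp. = Y) for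
   G-measurable Y iff E[X 1_A] <= E[Y 1_A] (resp. =) for all A in G. *)
Definition cond_prob_aggregate (d : measure_display) (T : measurableType d)
  (R : realType) (P : probability T R) (n : nat) (G : set (set T))
  (q r : 'I_n -> T -> R) : Prop :=
  [/\ (forall i t, 0 <= q i t <= 1),
      (forall (A : set T) (i : 'I_n), G A ->
         (\int[P]_(x in A) (q i x)%:E = \int[P]_(x in A) (r i x)%:E)%E),
      (\forall x \ae P, \sum_(i < n) q i x = \sum_(i < n) r i x),
      (forall (A : set T) (J : {set 'I_n}), G A ->
         (\int[P]_(x in A) (\prod_(i in J) q i x)%:E
            <= \int[P]_(x in A) (\prod_(i in J) r i x)%:E)%E)
    & (forall (A : set T) (J : {set 'I_n}), G A ->
         (\int[P]_(x in A) (\prod_(i in J) (1 - q i x))%:E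
            <= \int[P]_(x in A) (\prod_(i in J) (1 - r i x))%:E)%E)].

(* Main.v *)
Require Import Defs.
From HB Require Import structures.
From mathcomp Require Import all_boot all_order all_algebra.
From mathcomp Require Import all_classical all_reals all_analysis.
From mathcomp Require Import measurable_realfun.
Import Order.TTheory GRing.Theory Num.Theory.
Local Open Scope classical_set_scope.
Local Open Scope ring_scope.

Section helpers.
Variables (d : measure_display) (T : measurableType d) (R : realType)
  (P : probability T R).

Lemma ae_zero (A : set T) (f : T -> R) : measurable A ->
  measurable_fun setT f -> (forall x, 0 <= f x) ->
  (\int[P]_(x in A) (f x)%:E <= 0)%E -> \forall x \ae P, A x -> f x = 0.
Proof.
move=> mA mf f0 hle.
have mfA : measurable_fun A (EFin \o f).
  by apply/measurable_EFinP; apply: measurable_funS mf.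
have h0 : (\int[P]_(x in A) (f x)%:E = 0)%E.
  by apply/eqP; rewrite eq_le hle integral_ge0// => x _; rewrite lee_fin.
have : (\int[P]_(x in A) `|(f x)%:E| = 0)%E.
  by rewrite -h0; apply: eq_integral => x _; rewrite gee0_abs// lee_fin.
move/(ae_eq_integral_abs P mA mfA) => H.
by apply: filterS H => x /[apply] /= [[]].
Qed.

End helpers.

Theorem lemma3 (d : measure_display) (T : measurableType d) (R : realType)
  (P : probability T R) (n : nat) (p0 : 'I_n -> R)
  (p : nat -> 'I_n -> T -> R) :
  (forall i, 0 <= p0 i <= 1) ->
  (forall i t, p 0%N i t = p0 i) ->
  (forall h i, measurable_fun setT (p h i)) ->
  (forall h i t, 0 <= p h i t <= 1) ->
  (forall h, cond_prob_aggregate P (history p h) (p h.+1) (p h)) ->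
  [/\ (forall h (i : 'I_n), \forall x \ae P,
          (p h i x = 0 -> p h.+1 i x = 0) /\ (p h i x = 1 -> p h.+1 i x = 1)),
      (forall h h', (h <= h')%N -> \forall x \ae P, forall i : 'I_n,
          (p h i x = 0 -> p h' i x = 0) /\ (p h i x = 1 -> p h' i x = 1)),
      (forall h, \forall x \ae P,
          (#|[pred i : 'I_n | (0 < p h.+1 i x)%R]| <= #|[pred i : 'I_n | (0 < p h i x)%R]|)%N)
    & (forall h1 h2, (h1 < h2)%N ->
          cond_prob_aggregate P (history p h1) (p h2) (p h1))].
Proof.
move=> _ _ mp p01 Hagg.
have histS h h' : (h <= h')%N -> history p h `<=` history p h'.
  move=> hh'; apply: sub_sigma_algebra2 => A [k [i [B [kh [mB ->]]]]].
  by exists k, i, B; split => //; exact: leq_trans hh'.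
have histG h i c : history p h (p h i @^-1` [set c]).
  by apply: sub_sigma_algebra; exists h, i, [set c]; split => //.
have mpre h i c : measurable (p h i @^-1` [set c]).
  by have := mp h i measurableT _ (measurable_set1 c); rewrite setTI.
have part1 h (i : 'I_n) : \forall x \ae P,
    (p h i x = 0 -> p h.+1 i x = 0) /\ (p h i x = 1 -> p h.+1 i x = 1).
  have [_ _ _ Hq Hq1] := Hagg h.
  have e1 (f : 'I_n -> T -> R) (A : set T) :
      (\int[P]_(x in A) (\prod_(j in [set i]%SET) f j x)%:E
       = \int[P]_(x in A) (f i x)%:E)%E.
    by apply: eq_integral => x _; rewrite big_set1.
  have H0 : \forall x \ae P, (p h i @^-1` [set 0]) x -> p h.+1 i x = 0.
    apply: ae_zero => //; first by move=> x; have /andP[] := p01 h.+1 i x.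
    have := Hq _ [set i]%SET (histG h i 0).
    rewrite (e1 (p h.+1)) (e1 (p h)) => /le_trans; apply.
    rewrite (eq_integral (fun=> 0%E)) ?integral0// => x /set_mem /= ->.
    done.
  have H1 : \forall x \ae P, (p h i @^-1` [set 1]) x -> 1 - p h.+1 i x = 0.
    apply: ae_zero => //.
    - by apply: measurable_funB => //; exact: measurable_cst.
    - by move=> x; have /andP[_] := p01 h.+1 i x; rewrite subr_ge0.
    have := Hq1 _ [set i]%SET (histG h i 1).
    rewrite (e1 (fun j x => 1 - p h.+1 j x)) (e1 (fun j x => 1 - p h j x)).
    move=> /le_trans; apply.
    rewrite (eq_integral (fun=> 0%E)) ?integral0// => x /set_mem /= ->.
    by rewrite subrr.
  apply: filterS2 H0 H1 => x /= H0 H1; split => // /H1 /eqP.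
  by rewrite subr_eq0 => /eqP <-.
have part2 h k : \forall x \ae P, forall i : 'I_n,
    (p h i x = 0 -> p (h + k)%N i x = 0) /\ (p h i x = 1 -> p (h + k)%N i x = 1).
  elim: k => [|k IH]; first by apply: aeW => x i; rewrite addn0.
  apply: filterS2 IH (filter_forall _ (part1 (h + k)%N)) => x IH H i.
  rewrite addnS; have [a b] := IH i; have [c e] := H i; split.
  - by move/a/c.
  - by move/b/e.
split => //.
- move=> h h' hh'; rewrite -(subnKC hh'); exact: part2.
- move=> h; apply: filterS (filter_forall _ (part1 h)) => x H.
  apply: subset_leq_card; apply/fintype.subsetP => i; rewrite !inE => pos.
  have /andP[p0' _] := p01 h i x.
  rewrite lt_neqAle p0' andbT; apply/eqP => /esym /(proj1 (H i)) e.
  by move: pos; rewrite e ltxx.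
- move=> h1 h2 lt12.
  suff K k : cond_prob_aggregate P (history p h1) (p (h1 + k).+1) (p h1).
    by have := K (h2 - h1).-1; rewrite -addnS prednK ?subn_gt0// subnKC// ltnW.
  elim: k => [|k IH]; first by rewrite addn0.
  rewrite addnS.
  have [_ m2 s2 q2 r2] := Hagg (h1 + k).+1.
  have [b1 m1 s1 q1 r1] := IH.
  have hs : history p h1 `<=` history p (h1 + k).+1.
    by apply: histS; rewrite -addnS leq_addr.
  split => //.
  + move=> A i GA; rewrite m2; last exact: hs.
    exact: m1.
  + by apply: filterS2 s1 s2 => x e1 e2; rewrite e2 e1.
  + move=> A J GA; apply: le_trans (q1 A J GA); exact: q2 A J (hs _ GA).
  + move=> A J GA; apply: le_trans (r1 A J GA); exact: r2 A J (hs _ GA).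
Qed.
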